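(* Let $\rho$ be a state of a system with Hamiltonian $H$ and Gibbs state $\gamma$, and let $\epsilon\in[0,1)$. Suppose there exist a Hamiltonian $\tilde H$ (with Gibbs state $\tilde\gamma$), thermal operations $\mathcal{E}_1,\dots,\mathcal{E}_M$ from $H$ to $\tilde H$, and a POVM $\{\Pi_i\}_{i=1}^M$ on the output system such that $\frac1M\sum_{i=1}^M\mathrm{tr}[\mathcal{E}_i(\rho)\Pi_i]\ge1-\epsilon$. Then $$\log M\le D_H^{\epsilon}(\rho\|\gamma).$$
   Context: Fix $\beta>0$; logarithms are natural. Gibbs state of a Hamiltonian $K$: $e^{-\beta K}/\mathrm{tr}\,e^{-\beta K}$. A thermal operation from a system with Hamiltonian $K$ to one with Hamiltonian $K'$ is a channel $\mathcal{E}(\rho)=\mathrm{tr}_{E'}[U(\rho\otimes\gamma_E)U^\dagger]$ with an environment $E$ of Hamiltonian $H_E$ in its Gibbs state $\gamma_E$, a unitary $U$ commuting with $K\otimes\mathbb{1}+\mathbb{1}\otimes H_E$, and $E'$ a subsystem whose complement is the output system with Hamiltonian $K'$. The hypothesis testing relative entropy is $D_H^\epsilon(\rho\|\sigma)=-\log\inf\{\mathrm{tr}(Q\sigma):0\le Q\le\mathbb{1},\ \mathrm{tr}(Q\rho)\ge1-\epsilon\}$. *)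

(* Defs.v *)
From HB Require Import structures.
From mathcomp Require Import all_boot all_order all_algebra.
From mathcomp Require Import complex mxtens.
From mathcomp Require Import classical_sets boolp reals ereal topology normedtype sequences exp.

Set Implicit Arguments.
Unset Strict Implicit.
Unset Printing Implicit Defensive.

Import Order.TTheory GRing.Theory Num.Theory.
Local Open Scope ring_scope.
Local Open Scope classical_set_scope.

Section QDefs.
Variable R : realType.
Local Notation C := (R[i]).

Definition adj {m n} (A : 'M[C]_(m, n)) : 'M[C]_(n, m) := (map_mx Num.conj A)^T.

Definition is_herm {n} (A : 'M[C]_n) : Prop := adj A = A.

Definition is_unitary_mx {n} (U : 'M[C]_n) : Prop :=
  U *m adj U = 1%:M /\ adj U *m U = 1%:M.

Definition psd {n} (A : 'M[C]_n) : Prop :=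
  forall v : 'cV[C]_n, 0 <= (adj v *m A *m v) 0 0.

Definition state {n} (rho : 'M[C]_n) : Prop := psd rho /\ \tr rho = 1.

(* Gibbs state of a Hamiltonian K at inverse temperature beta:
   gamma = e^{-beta K} / tr e^{-beta K}, with the matrix exponential given
   by the spectral decomposition K = V diag(E) V^dagger. *)
Definition gibbs (beta : R) {n} (K gamma : 'M[C]_n) : Prop :=
  exists (V : 'M[C]_n) (E : 'I_n -> R),
    is_unitary_mx V /\
    K = V *m diag_mx (\row_i (E i)%:C%C) *m adj V /\
    gamma = V *m diag_mx (\row_i ((expR (- beta * E i)
                 / \sum_(j < n) expR (- beta * E j))%:C%C)) *m adj V.

Definition ptrace2 {k e} (X : 'M[C]_(k * e)) : 'M[C]_k :=
  \matrix_(i, j) \sum_(l < e) X (mxtens_index (i, l)) (mxtens_index (j, l)).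

(* The total space S (x) E is
   identified with S' (x) E' through U (an energy-preserving is_unitary_mx):
   U (K (x) 1 + 1 (x) H_E) = (K' (x) 1 + 1 (x) H_E') U. *)
Definition thermal_op (beta : R) {n k} (K : 'M[C]_n) (K' : 'M[C]_k)
    (Ch : 'M[C]_n -> 'M[C]_k) : Prop :=
  exists (e e' : nat) (HE : 'M[C]_e) (gE : 'M[C]_e) (HE' : 'M[C]_e')
         (U : 'M[C]_(k * e', n * e)),
    is_herm HE /\ is_herm HE' /\ gibbs beta HE gE /\
    U *m adj U = 1%:M /\ adj U *m U = 1%:M /\
    U *m (K *t (1%:M : 'M[C]_e) + (1%:M : 'M[C]_n) *t HE)
      = (K' *t (1%:M : 'M[C]_e') + (1%:M : 'M[C]_k) *t HE') *m U /\
    forall rho : 'M[C]_n, Ch rho = ptrace2 (U *m (rho *t gE) *m adj U).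

Definition effect {n} (Q : 'M[C]_n) : Prop := psd Q /\ psd (1%:M - Q).

Definition povm {k M} (Pi : 'I_M -> 'M[C]_k) : Prop :=
  (forall i, psd (Pi i)) /\ \sum_(i < M) Pi i = 1%:M.

Definition DH (eps : R) {n} (rho sigma : 'M[C]_n) : R :=
  - ln (inf [set x : R | exists Q : 'M[C]_n,
              effect Q /\ ((1 - eps)%:C%C <= \tr (Q *m rho)) /\
              x = complex.Re (\tr (Q *m sigma))]).

End QDefs.

(* Main.v *)
Require Import Defs.
From HB Require Import structures.
From mathcomp Require Import all_boot all_order all_algebra.
From mathcomp Require Import complex mxtens.
From mathcomp Require Import classical_sets boolp reals ereal topology normedtype sequences exp.
From mathcomp Require Import ring.
From mathcomp Require spectral.

Import Order.TTheory GRing.Theory Num.Theory.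
Local Open Scope ring_scope.

Set Implicit Arguments.
Unset Strict Implicit.
Unset Printing Implicit Defensive.



Lemma hadjE {R : realType} m n (A : 'M[R[i]]_(m, n)) i j : adj A i j = (A j i)^*.
Proof. by rewrite /adj !mxE. Qed.

Lemma hadjK {R : realType} m n (A : 'M[R[i]]_(m, n)) : adj (adj A) = A.
Proof. by apply/matrixP => i j; rewrite !hadjE conjCK. Qed.

Lemma hadj_mul {R : realType} m n p (A : 'M[R[i]]_(m, n)) (B : 'M[R[i]]_(n, p)) :
  adj (A *m B) = adj B *m adj A.
Proof.
apply/matrixP => i j; rewrite hadjE !mxE rmorph_sum; apply: eq_bigr => l _.
by rewrite !hadjE rmorphM mulrC.
Qed.

Lemma hadjD {R : realType} m n (A B : 'M[R[i]]_(m, n)) : adj (A + B) = adj A + adj B.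
Proof. by apply/matrixP => i j; rewrite !hadjE !mxE rmorphD. Qed.

Lemma hadjB {R : realType} m n (A B : 'M[R[i]]_(m, n)) : adj (A - B) = adj A - adj B.
Proof. by apply/matrixP => i j; rewrite !hadjE !mxE rmorphB. Qed.

Lemma hadjZ {R : realType} m n (c : R[i]) (A : 'M[R[i]]_(m, n)) : adj (c *: A) = c^* *: adj A.
Proof. by apply/matrixP => i j; rewrite !hadjE !mxE rmorphM. Qed.

Lemma hadj_sum {R : realType} m n I (r : seq I) (P : pred I) (F : I -> 'M[R[i]]_(m, n)) :
  adj (\sum_(x <- r | P x) F x) = \sum_(x <- r | P x) adj (F x).
Proof.
apply/matrixP => i j; rewrite hadjE !summxE rmorph_sum.
by apply: eq_bigr => x _; rewrite hadjE.
Qed.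

Lemma hadj1 {R : realType} n : adj (1%:M : 'M[R[i]]_n) = 1%:M.
Proof. by apply/matrixP => i j; rewrite hadjE !mxE rmorph_nat eq_sym. Qed.

Lemma hadj_tens {R : realType} m n p q (A : 'M[R[i]]_(m, n)) (B : 'M[R[i]]_(p, q)) :
  adj (A *t B) = adj A *t adj B.
Proof. by apply/matrixP => i j; rewrite /adj !mxE rmorphM. Qed.

Lemma hadj_diag {R : realType} n (d : 'rV[R[i]]_n) :
  adj (diag_mx d) = diag_mx (map_mx Num.conj d).
Proof.
apply/matrixP => i j; rewrite /adj !mxE rmorphMn.
by case: (eqVneq i j) => [->|h]; rewrite ?eqxx // eq_sym (negbTE h) !mulr0n.
Qed.

Lemma tens11 {R : realType} m n :
  (1%:M : 'M[R[i]]_m) *t (1%:M : 'M[R[i]]_n) = 1%:M.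
Proof.
apply/matrixP => p q.
case: (mxtens_indexP p) => i l; case: (mxtens_indexP q) => j l'.
rewrite tensmxE !mxE.
have -> : (mxtens_index (i, l) == mxtens_index (j, l')) = ((i == j) && (l == l')).
  apply/eqP/andP => [/(congr1 (@mxtens_unindex m n))|[/eqP-> /eqP->]//].
  by rewrite !mxtens_indexK => -[-> ->].
by case: (i == j); case: (l == l'); rewrite /= ?mulr1n ?mulr0n ?mulr1 ?mulr0.
Qed.

Lemma sum_tens {R : realType} m n (F : 'I_(m * n) -> R[i]) :
  \sum_p F p = \sum_i \sum_l F (mxtens_index (i, l)).
Proof.
rewrite pair_bigA /=.
rewrite (reindex (@mxtens_index m n)) /=; last first.
  by exists (@mxtens_unindex m n) => x _; rewrite ?mxtens_indexK ?mxtens_unindexK.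
by apply: eq_bigr => -[i l].
Qed.


Lemma psd0 {R : realType} n : psd (0 : 'M[R[i]]_n).
Proof. by move=> v; rewrite mulmx0 mul0mx mxE. Qed.

Lemma psdD {R : realType} n (A B : 'M[R[i]]_n) : psd A -> psd B -> psd (A + B).
Proof. by move=> hA hB v; rewrite mulmxDr mulmxDl mxE addr_ge0. Qed.

Lemma psdZ {R : realType} n (c : R[i]) (A : 'M[R[i]]_n) : 0 <= c -> psd A -> psd (c *: A).
Proof. by move=> hc hA v; rewrite -scalemxAr -scalemxAl mxE mulr_ge0. Qed.

Lemma psd_sum {R : realType} n I (r : seq I) (P : pred I) (F : I -> 'M[R[i]]_n) :
  (forall x, P x -> psd (F x)) -> psd (\sum_(x <- r | P x) F x).
Proof.
move=> h; elim/big_ind: _ => //; [exact: psd0 | exact: psdD].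
Qed.

Lemma psd_conj {R : realType} n m (A : 'M[R[i]]_n) (Y : 'M[R[i]]_(n, m)) :
  psd A -> psd (adj Y *m A *m Y).
Proof.
move=> hA v; have := hA (Y *m v).
by rewrite hadj_mul !mulmxA.
Qed.

Lemma psd_entry {R : realType} n (A : 'M[R[i]]_n) c : psd A -> 0 <= A c c.
Proof.
move=> hA; have := hA (delta_mx c 0).
have -> : adj (delta_mx c 0 : 'cV[R[i]]_n) = delta_mx 0 c.
  apply/matrixP => i j; rewrite hadjE !mxE.
  by case: (i == 0) ; case: (j == c); rewrite /= ?conjC1 ?conjC0.
by rewrite -rowE -colE !mxE.
Qed.

Lemma psd_conj_entry {R : realType} n m (A : 'M[R[i]]_n) (Y : 'M[R[i]]_(n, m)) c :
  psd A -> 0 <= (adj Y *m A *m Y) c c.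
Proof. by move=> hA; apply: psd_entry; apply: psd_conj. Qed.

Lemma psd1 {R : realType} n : psd (1%:M : 'M[R[i]]_n).
Proof.
move=> v; rewrite mulmx1 mxE; apply: sumr_ge0 => i _.
by rewrite hadjE mulrC mul_conjC_ge0.
Qed.

Lemma quadE {R : realType} n (A : 'M[R[i]]_n) (v : 'cV[R[i]]_n) :
  (adj v *m A *m v) 0 0 = \sum_p \sum_q (v p 0)^* * A p q * v q 0.
Proof.
rewrite mxE; under eq_bigr do rewrite mxE big_distrl /=.
rewrite exchange_big /=; apply: eq_bigr => p _; apply: eq_bigr => q _.
by rewrite hadjE.
Qed.


Lemma delta_quad {R : realType} n (A : 'M[R[i]]_n) i j :
  ((delta_mx 0 i : 'rV[R[i]]_n) *m A *m (delta_mx j 0 : 'cV[R[i]]_n)) 0 0 = A i j.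
Proof. by rewrite -rowE -colE !mxE. Qed.

Lemma hadj_delta {R : realType} n (c : 'I_n) :
  adj (delta_mx c 0 : 'cV[R[i]]_n) = (delta_mx 0 c : 'rV[R[i]]_n).
Proof.
apply/matrixP => i j; rewrite hadjE !mxE.
by case: (i == 0) ; case: (j == c); rewrite /= ?conjC1 ?conjC0.
Qed.

Lemma quad2 {R : realType} n (A : 'M[R[i]]_n) i j (a b : R[i]) :
  let v : 'cV[R[i]]_n := a *: delta_mx i 0 + b *: delta_mx j 0 in
  (adj v *m A *m v) 0 0 = a^* * a * A i i + a^* * b * A i j + b^* * a * A j i + b^* * b * A j j.
Proof.
rewrite /= hadjD !hadjZ !hadj_delta.
have E x y : ((delta_mx 0 x : 'rV[R[i]]_n) *m A *m (delta_mx y 0 : 'cV[R[i]]_n)) = (A x y)%:M.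
  by apply/matrixP => p q; rewrite [p]ord1 [q]ord1 delta_quad mxE eqxx mulr1n.
rewrite !mulmxDl !mulmxDr -!scalemxAl -!scalemxAr !E !mxE !eqxx !mulr1n.
rewrite -!mulrA; ring.
Qed.

Lemma psd_herm {R : realType} n (A : 'M[R[i]]_n) : psd A -> adj A = A.
Proof.
move=> hA; apply/matrixP => i j; rewrite hadjE.
have ri := ger0_real (psd_entry i hA).
have rj := ger0_real (psd_entry j hA).
have h1 := ger0_real (hA (1 *: delta_mx i 0 + 1 *: delta_mx j 0)).
have h2 := ger0_real (hA (1 *: delta_mx i 0 + 'i *: delta_mx j 0)).
rewrite quad2 in h1; rewrite quad2 in h2.
move: ri rj h1 h2; rewrite !CrealE !rmorphD !rmorphM !rmorph1 !conjCi ?rmorphN ?conjCK.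
move=> /eqP ri /eqP rj /eqP h1 /eqP h2.
move: h1 h2 => /= h1 h2; move: h1 h2; rewrite !conjCi ri rj.
move=> /eqP; rewrite -subr_eq0 => /eqP h1.
move=> /eqP; rewrite -subr_eq0 => /eqP h2.
have ii : 'i * 'i = -1 :> R[i] by rewrite -expr2 sqrCi.
have e1 : (A i j)^* + (A j i)^* - A i j - A j i = 0 by rewrite -h1; ring.
have e2 : 'i * (- 'i * (A i j)^* + 'i * (A j i)^* - 'i * A i j + 'i * A j i) = 0.
  by rewrite -[RHS](mulr0 'i) -h2; congr (_ * _); ring.
have e3 : (A i j)^* - (A j i)^* + A i j - A j i = 0.
  rewrite -e2.
  have -> : 'i * (- 'i * (A i j)^* + 'i * (A j i)^* - 'i * A i j + 'i * A j i)
      = - ('i * 'i) * ((A i j)^* - (A j i)^* + A i j - A j i) by ring.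
  by rewrite ii opprK mul1r.
have : ((A i j)^* - A j i) *+ 2 = 0.
  have -> : ((A i j)^* - A j i) *+ 2 = ((A i j)^* + (A j i)^* - A i j - A j i) + ((A i j)^* - (A j i)^* + A i j - A j i).
    by rewrite mulr2n; ring.
  by rewrite e1 e3 addr0.
move/eqP; rewrite -mulr_natr mulf_eq0 pnatr_eq0 orbF subr_eq0 => /eqP h.
by rewrite -h conjCK.
Qed.


Lemma sum_delta_r {R : realType} n (F : 'I_n -> R[i]) i :
  \sum_j F j * (j == i)%:R = F i.
Proof.
rewrite (bigD1 i) //= eqxx mulr1 big1 ?addr0 // => j /negbTE ->.
by rewrite mulr0.
Qed.

Lemma sum_delta_l {R : realType} n (F : 'I_n -> R[i]) i :
  \sum_j (i == j)%:R * F j = F i.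
Proof.
rewrite -[RHS](sum_delta_r F i); apply: eq_bigr => j _.
by rewrite mulrC eq_sym.
Qed.

Lemma tens1E {R : realType} k e (X : 'M[R[i]]_k) i l j l' :
  (X *t (1%:M : 'M[R[i]]_e)) (mxtens_index (i, l)) (mxtens_index (j, l'))
  = X i j * (l == l')%:R.
Proof. by rewrite tensmxE mxE. Qed.

Lemma tr_ptrace_mul {R : realType} k e (Z : 'M[R[i]]_(k * e)) (X : 'M[R[i]]_k) :
  \tr (ptrace2 Z *m X) = \tr (Z *m (X *t (1%:M : 'M[R[i]]_e))).
Proof.
rewrite /mxtrace [RHS]sum_tens.
have -> : \sum_i \sum_l (Z *m (X *t (1%:M : 'M[R[i]]_e))) (mxtens_index (i, l)) (mxtens_index (i, l))
   = \sum_i \sum_l \sum_j Z (mxtens_index (i, l)) (mxtens_index (j, l)) * X j i.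
  apply: eq_bigr => i _; apply: eq_bigr => l _.
  rewrite mxE sum_tens; apply: eq_bigr => j _.
  under eq_bigr do rewrite tens1E mulrA.
  by rewrite sum_delta_r.
apply: eq_bigr => i _; rewrite mxE exchange_big /=; apply: eq_bigr => j _.
by rewrite mxE big_distrl.
Qed.

Lemma ptrace2_tens {R : realType} k e (A : 'M[R[i]]_k) (B : 'M[R[i]]_e) :
  ptrace2 (A *t B) = \tr B *: A.
Proof.
apply/matrixP => i j; rewrite !mxE /mxtrace big_distrl /=.
by apply: eq_bigr => l _; rewrite tensmxE mulrC.
Qed.

Lemma tr_tens {R : realType} k e (A : 'M[R[i]]_k) (B : 'M[R[i]]_e) :
  \tr (A *t B) = \tr A * \tr B.
Proof.
rewrite /mxtrace sum_tens big_distrl /=; apply: eq_bigr => i _.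
rewrite big_distrr /=; apply: eq_bigr => l _.
by rewrite tensmxE.
Qed.

Lemma ptrace2Z {R : realType} k e (c : R[i]) (Z : 'M[R[i]]_(k * e)) :
  ptrace2 (c *: Z) = c *: ptrace2 Z.
Proof.
apply/matrixP => i j; rewrite !mxE big_distrr /=.
by apply: eq_bigr => l _; rewrite mxE.
Qed.

Lemma tr_ptrace {R : realType} k e (Z : 'M[R[i]]_(k * e)) :
  \tr (ptrace2 Z) = \tr Z.
Proof.
rewrite /mxtrace sum_tens; apply: eq_bigr => i _.
by rewrite mxE.
Qed.


Definition Jb {R : realType} n e (W : 'M[R[i]]_e) (b : 'I_e) : 'M[R[i]]_(n * e, n) :=
  \matrix_(p, c) (((mxtens_unindex p).1 == c)%:R * W (mxtens_unindex p).2 b).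

Lemma Jb_mul {R : realType} n e m (W : 'M[R[i]]_e) b (A : 'M[R[i]]_(n, m)) i l d :
  (Jb n W b *m A) (mxtens_index (i, l)) d = W l b * A i d.
Proof.
rewrite mxE; under eq_bigr do rewrite mxE mxtens_indexK /= -mulrA.
by rewrite sum_delta_l.
Qed.

Lemma mul_adjJb {R : realType} n e m (W : 'M[R[i]]_e) b (A : 'M[R[i]]_(m, n)) x j l :
  (A *m adj (Jb n W b)) x (mxtens_index (j, l)) = A x j * (W l b)^*.
Proof.
rewrite mxE; under eq_bigr do rewrite hadjE mxE mxtens_indexK /= rmorphM rmorph_nat mulrA.
rewrite -(sum_delta_r (fun i => A x i * (W l b)^*) j); apply: eq_bigr => i _; rewrite eq_sym /=; ring.
Qed.

Lemma adjJb_Jb {R : realType} n e (W : 'M[R[i]]_e) b :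
  adj W *m W = 1%:M -> adj (Jb n W b) *m Jb n W b = 1%:M.
Proof.
move=> hW; apply/matrixP => c d; rewrite mxE sum_tens.
have hbb : (adj W *m W) b b = 1 by rewrite hW mxE eqxx.
rewrite mxE in hbb.
under eq_bigr do under eq_bigr do rewrite hadjE !mxE mxtens_indexK /= rmorphM rmorph_nat.
transitivity (\sum_i (i == c)%:R * ((i == d)%:R * \sum_l (W l b)^* * W l b)).
  apply: eq_bigr => i _; rewrite !big_distrr; apply: eq_bigr => l _ /=; ring.
have -> : \sum_l (W l b)^* * W l b = 1.
  by rewrite -hbb; apply: eq_bigr => l _; rewrite hadjE.
under eq_bigr do rewrite eq_sym.
by rewrite sum_delta_l mulr1 mxE.
Qed.

Lemma tens_decomp {R : realType} n e (W : 'M[R[i]]_e) (d : 'rV[R[i]]_e) (s : 'M[R[i]]_n) :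
  s *t (W *m diag_mx d *m adj W) = \sum_b d 0 b *: (Jb n W b *m s *m adj (Jb n W b)).
Proof.
apply/matrixP => p q.
case: (mxtens_indexP p) => i l; case: (mxtens_indexP q) => j l'.
rewrite tensmxE summxE.
under [RHS]eq_bigr do rewrite mxE mul_adjJb Jb_mul.
rewrite mxE big_distrr /=; apply: eq_bigr => b _.
rewrite hadjE mul_mx_diag !mxE; ring.
Qed.

Definition Dual {R : realType} n e k e' (U : 'M[R[i]]_(k * e', n * e)) (W : 'M[R[i]]_e)
  (d : 'rV[R[i]]_e) (X : 'M[R[i]]_k) : 'M[R[i]]_n :=
  \sum_b d 0 b *: (adj (Jb n W b) *m (adj U *m (X *t (1%:M : 'M[R[i]]_e')) *m U) *m Jb n W b).

Lemma Dual_tr {R : realType} n e k e' (U : 'M[R[i]]_(k * e', n * e)) (W : 'M[R[i]]_e)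
  (d : 'rV[R[i]]_e) (s : 'M[R[i]]_n) (X : 'M[R[i]]_k) :
  \tr (ptrace2 (U *m (s *t (W *m diag_mx d *m adj W)) *m adj U) *m X)
  = \tr (s *m Dual U W d X).
Proof.
rewrite tr_ptrace_mul -!mulmxA mxtrace_mulC !mulmxA tens_decomp.
rewrite /Dual mulmx_sumr !mulmx_suml !raddf_sum; apply: eq_bigr => b _.
rewrite /= -!scalemxAl -scalemxAr !mxtraceZ; congr (_ * _).
set Y := adj U *m _ *m U.
by rewrite -!mulmxA mxtrace_mulC !mulmxA.
Qed.

Lemma psd_tens1 {R : realType} k e' (X : 'M[R[i]]_k) :
  psd X -> psd (X *t (1%:M : 'M[R[i]]_e')).
Proof.
move=> hX v; rewrite quadE sum_tens.
have -> : \sum_i \sum_l \sum_q (v (mxtens_index (i, l)) 0)^* * (X *t (1%:M : 'M[R[i]]_e')) (mxtens_index (i, l)) q * v q 0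
  = \sum_l \sum_i \sum_j (v (mxtens_index (i, l)) 0)^* * X i j * v (mxtens_index (j, l)) 0.
  rewrite exchange_big /=; apply: eq_bigr => l _; apply: eq_bigr => i _.
  rewrite sum_tens; apply: eq_bigr => j _.
  under eq_bigr do rewrite tens1E.
  rewrite -(sum_delta_l (fun l' => (v (mxtens_index (i, l)) 0)^* * X i j * v (mxtens_index (j, l')) 0) l).
  by apply: eq_bigr => l' _ /=; ring.
apply: sumr_ge0 => l _.
have := hX (\col_i v (mxtens_index (i, l)) 0).
by rewrite quadE; under eq_bigr do under eq_bigr do rewrite !mxE.
Qed.

Lemma Dual_psd {R : realType} n e k e' (U : 'M[R[i]]_(k * e', n * e)) (W : 'M[R[i]]_e)
  (d : 'rV[R[i]]_e) (X : 'M[R[i]]_k) :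
  (forall b, 0 <= d 0 b) -> psd X -> psd (Dual U W d X).
Proof.
move=> hd hX; apply: psd_sum => b _; apply: psdZ => //.
apply: psd_conj; apply: psd_conj; exact: psd_tens1.
Qed.

Lemma tens1B {R : realType} k e' (A B : 'M[R[i]]_k) :
  (A - B) *t (1%:M : 'M[R[i]]_e') = A *t 1%:M - B *t 1%:M.
Proof. by apply/matrixP => p q; rewrite !mxE mulrBl. Qed.

Lemma Dual_B {R : realType} n e k e' (U : 'M[R[i]]_(k * e', n * e)) (W : 'M[R[i]]_e)
  (d : 'rV[R[i]]_e) (A B : 'M[R[i]]_k) :
  Dual U W d (A - B) = Dual U W d A - Dual U W d B.
Proof.
rewrite /Dual -sumrB; apply: eq_bigr => b _.
by rewrite tens1B mulmxBr mulmxBl mulmxBr mulmxBl scalerBr.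
Qed.

Lemma Dual_1 {R : realType} n e k e' (U : 'M[R[i]]_(k * e', n * e)) (W : 'M[R[i]]_e)
  (d : 'rV[R[i]]_e) :
  adj U *m U = 1%:M -> adj W *m W = 1%:M ->
  Dual U W d 1%:M = (\sum_b d 0 b) *: 1%:M.
Proof.
move=> hU hW; rewrite /Dual tens11 mulmx1 hU scaler_suml.
by apply: eq_bigr => b _; rewrite mulmx1 adjJb_Jb.
Qed.

Lemma Dual_effect {R : realType} n e k e' (U : 'M[R[i]]_(k * e', n * e)) (W : 'M[R[i]]_e)
  (d : 'rV[R[i]]_e) (X : 'M[R[i]]_k) :
  adj U *m U = 1%:M -> adj W *m W = 1%:M ->
  (forall b, 0 <= d 0 b) -> \sum_b d 0 b <= 1 ->
  effect X -> effect (Dual U W d X).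
Proof.
move=> hU hW hd hs [hX1 hX2]; split; first exact: Dual_psd.
have -> : 1%:M - Dual U W d X = (1 - \sum_b d 0 b) *: 1%:M + Dual U W d (1%:M - X).
  rewrite Dual_B Dual_1 // scalerBl scale1r addrA subrK //.
apply: psdD; last exact: Dual_psd.
by apply: psdZ; [rewrite subr_ge0 | exact: psd1].
Qed.


Lemma interp {F : fieldType} (s : seq F) (g : F -> F) :
  exists p : {poly F}, forall x, x \in s -> p.[x] = g x.
Proof.
elim: s => [|x s [p hp]]; first by exists 0.
case: (boolP (x \in s)) => xs.
  by exists p => y; rewrite inE => /orP[/eqP->|]; [exact: hp | exact: hp].
pose q := \prod_(y <- s) ('X - y%:P).
have qx : q.[x] != 0.
  rewrite horner_prod prodf_seq_neq0; apply/allP => y ys /=.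
  by rewrite !hornerE subr_eq0; apply: contraNneq xs => ->.
exists (p + ((g x - p.[x]) / q.[x]) *: q) => y; rewrite inE => /orP[/eqP->|ys].
  by rewrite hornerD hornerZ divfK // addrC subrK.
have qy : q.[y] = 0.
  rewrite horner_prod (big_rem y) //= !hornerE subrr mul0r //.
by rewrite hornerD hornerZ qy mulr0 addr0 hp.
Qed.

Definition mpow {R : realType} N (A : 'M[R[i]]_N) (j : nat) : 'M[R[i]]_N :=
  iter j (mulmx A) 1%:M.

Definition pev {R : realType} N (p : {poly R[i]}) (A : 'M[R[i]]_N) : 'M[R[i]]_N :=
  \sum_(j < size p) p`_j *: mpow A j.

Lemma mpow_conj {R : realType} m N (U : 'M[R[i]]_(m, N)) (A : 'M[R[i]]_N) j :
  adj U *m U = 1%:M -> U *m adj U = 1%:M ->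
  mpow (U *m A *m adj U) j = U *m mpow A j *m adj U.
Proof.
move=> h1 h2; elim: j => [|j IH] /=; first by rewrite /mpow /= mulmx1.
rewrite /mpow /= -/(mpow _ j) -/(mpow _ j) IH.
by rewrite !mulmxA -[U *m A *m adj U *m U]mulmxA h1 mulmx1.
Qed.

Lemma pev_conj {R : realType} m N (U : 'M[R[i]]_(m, N)) (A : 'M[R[i]]_N) p :
  adj U *m U = 1%:M -> U *m adj U = 1%:M ->
  pev p (U *m A *m adj U) = U *m pev p A *m adj U.
Proof.
move=> h1 h2; rewrite /pev mulmx_sumr mulmx_suml; apply: eq_bigr => j _.
by rewrite mpow_conj // scalemxAl scalemxAr.
Qed.

Lemma mpow_diag {R : realType} N (d : 'rV[R[i]]_N) j :
  mpow (diag_mx d) j = diag_mx (\row_c (d 0 c ^+ j)).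
Proof.
elim: j => [|j IH]; rewrite /mpow /=.
  by apply/matrixP => a b; rewrite !mxE expr0.
rewrite -/(mpow _ j) IH mulmx_diag; congr diag_mx.
by apply/rowP => c; rewrite !mxE exprS.
Qed.

Lemma pev_diag {R : realType} N (d : 'rV[R[i]]_N) p :
  pev p (diag_mx d) = diag_mx (\row_c p.[d 0 c]).
Proof.
apply/matrixP => a b; rewrite /pev summxE !mxE horner_coef.
under eq_bigr do rewrite mpow_diag !mxE.
rewrite -sumrMnl; apply: eq_bigr => j _; by rewrite mulrnAr.
Qed.

Lemma pev_udiag {R : realType} N (V : 'M[R[i]]_N) (d : 'rV[R[i]]_N) p :
  adj V *m V = 1%:M -> V *m adj V = 1%:M ->
  pev p (V *m diag_mx d *m adj V) = V *m diag_mx (\row_c p.[d 0 c]) *m adj V.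
Proof. by move=> h1 h2; rewrite pev_conj // pev_diag. Qed.


Lemma diag_tens {R : realType} n e (d1 : 'rV[R[i]]_n) (d2 : 'rV[R[i]]_e) :
  diag_mx d1 *t diag_mx d2
  = diag_mx (\row_p (d1 0 (mxtens_unindex p).1 * d2 0 (mxtens_unindex p).2)).
Proof.
apply/matrixP => p q.
case: (mxtens_indexP p) => i l; case: (mxtens_indexP q) => j l'.
rewrite tensmxE !mxE mxtens_indexK /=.
have -> : (mxtens_index (i, l) == mxtens_index (j, l')) = ((i == j) && (l == l')).
  apply/eqP/andP => [/(congr1 (@mxtens_unindex n e))|[/eqP-> /eqP->]//].
  by rewrite !mxtens_indexK => -[-> ->].
by case: (i == j); case: (l == l'); rewrite /= ?mulr1n ?mulr0n ?mulr0 ?mul0r.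
Qed.

Lemma tens_udiag {R : realType} n e (A : 'M[R[i]]_n) (B : 'M[R[i]]_e)
   (d1 : 'rV[R[i]]_n) (d2 : 'rV[R[i]]_e) :
  (A *m diag_mx d1 *m adj A) *t (B *m diag_mx d2 *m adj B)
  = (A *t B) *m diag_mx (\row_p (d1 0 (mxtens_unindex p).1 * d2 0 (mxtens_unindex p).2))
    *m adj (A *t B).
Proof. by rewrite hadj_tens -diag_tens !tensmx_mul. Qed.

Lemma tensZZ {R : realType} m n p q (a b : R[i]) (A : 'M[R[i]]_(m, n)) (B : 'M[R[i]]_(p, q)) :
  (a *: A) *t (b *: B) = (a * b) *: (A *t B).
Proof. by apply/matrixP => x y; rewrite !mxE; ring. Qed.

Lemma udiag1 {R : realType} n (V : 'M[R[i]]_n) :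
  V *m adj V = 1%:M -> 1%:M = V *m diag_mx (const_mx 1) *m adj V.
Proof. by move=> h; rewrite diag_const_mx mulmx1. Qed.

Lemma tens_sum_decomp {R : realType} n e (V : 'M[R[i]]_n) (W : 'M[R[i]]_e)
   (d1 : 'rV[R[i]]_n) (d2 : 'rV[R[i]]_e) :
  V *m adj V = 1%:M -> W *m adj W = 1%:M ->
  (V *m diag_mx d1 *m adj V) *t (1%:M : 'M[R[i]]_e) + (1%:M : 'M[R[i]]_n) *t (W *m diag_mx d2 *m adj W)
  = (V *t W) *m diag_mx (\row_p (d1 0 (mxtens_unindex p).1 + d2 0 (mxtens_unindex p).2))
    *m adj (V *t W).
Proof.
move=> hV hW.
rewrite {1}(udiag1 hW) {1}(udiag1 hV) !tens_udiag -mulmxDl -mulmxDr.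
congr (_ *m _ *m _); apply/matrixP => a b; rewrite !mxE.
by rewrite mulr1 mul1r -mulrnDl.
Qed.


Lemma sum_expR_gt0 {R : realType} n (beta : R) (E : 'I_n -> R) :
  (0 < n)%N -> 0 < \sum_j expR (- beta * E j).
Proof.
move=> n0; rewrite (bigD1 (Ordinal n0)) //=.
apply: (lt_le_trans (expR_gt0 (- beta * E (Ordinal n0)))).
rewrite lerDl; apply: sumr_ge0 => j _; exact: ltW (expR_gt0 _).
Qed.

Lemma gibbs_scaled {R : realType} (beta : R) n (K g : 'M[R[i]]_n) :
  gibbs beta K g -> (0 < n)%N ->
  exists (V : 'M[R[i]]_n) (E : 'I_n -> R) (c : R[i]),
    [/\ is_unitary_mx V, K = V *m diag_mx (\row_i (E i)%:C%C) *m adj V, c != 0 &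
       V *m diag_mx (\row_i (expR (- beta * E i))%:C%C) *m adj V = c *: g].
Proof.
move=> [V [E [hV [hK hg]]]] n0.
have S0 := sum_expR_gt0 beta E n0.
exists V, E, (\sum_j expR (- beta * E j))%:C%C; split => //.
  by rewrite eq_complex /= negb_and lt0r_neq0.
rewrite hg scalemxAl scalemxAr; congr (_ *m _ *m _).
apply/matrixP => a b; rewrite !mxE mulrnAr -rmorphM /=.
by rewrite mulrCA divff ?mulr1 // lt0r_neq0.
Qed.

Lemma gibbs_trace {R : realType} (beta : R) n (K g : 'M[R[i]]_n) :
  gibbs beta K g -> (0 < n)%N -> \tr g = 1.
Proof.
move=> [V [E [[hV1 hV2] [hK ->]]]] n0.
have S0 := sum_expR_gt0 beta E n0.
rewrite -mulmxA mxtrace_mulC -mulmxA hV2 mulmx1 mxtrace_diag.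
under eq_bigr do rewrite mxE.
rewrite -rmorph_sum /= -mulr_suml divff //; exact: lt0r_neq0.
Qed.


Lemma herm_decomp {R : realType} e (A : 'M[R[i]]_e) :
  adj A = A -> exists (X : 'M[R[i]]_e) (sp : 'rV[R[i]]_e),
    [/\ X *m adj X = 1%:M, adj X *m X = 1%:M & A = X *m diag_mx sp *m adj X].
Proof.
move=> hA.
have tA : map_mx Num.conj (trmx A) = A.
  by rewrite -[RHS]hA; apply/matrixP => i j; rewrite hadjE !mxE.
have nA : A \is spectral.normalmx.
  by rewrite qualifE tA.
have := spectral.orthomx_spectralP nA.
set P := spectral.spectralmx A; set sp := spectral.spectral_diag A => hdec.
have Pu : P \is spectral.unitarymx := spectral.spectral_unitarymx A.
have hinv : invmx P = adj P.
  rewrite spectral.invmx_unitary //; apply/matrixP => i j; rewrite hadjE !mxE //.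
have h1 : P *m adj P = 1%:M.
  rewrite -hinv mulmxV //; exact: spectral.spectral_unit.
have h2 : adj P *m P = 1%:M.
  rewrite -hinv mulVmx //; exact: spectral.spectral_unit.
exists (adj P), sp; split.
- by rewrite hadjK.
- by rewrite hadjK.
- by rewrite hadjK -hinv.
Qed.


Lemma pres_scalar {R : realType} (beta : R) n k e e' (H g : 'M[R[i]]_n) (Ht gt : 'M[R[i]]_k)
  (HE gE : 'M[R[i]]_e) (HE' : 'M[R[i]]_e') (U : 'M[R[i]]_(k * e', n * e)) :
  (0 < n)%N -> (0 < e)%N -> (0 < k)%N ->
  gibbs beta H g -> gibbs beta Ht gt -> gibbs beta HE gE -> is_herm HE' ->
  U *m adj U = 1%:M -> adj U *m U = 1%:M ->
  U *m (H *t (1%:M : 'M[R[i]]_e) + (1%:M : 'M[R[i]]_n) *t HE)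
      = (Ht *t (1%:M : 'M[R[i]]_e') + (1%:M : 'M[R[i]]_k) *t HE') *m U ->
  exists lam : R[i], ptrace2 (U *m (g *t gE) *m adj U) = lam *: gt.
Proof.
move=> n0 e0 k0 hg hgt hgE hHE' hU1 hU2 hcomm.
have [V [E [c [[hV1 hV2] hH cn0 hc]]]] := gibbs_scaled hg n0.
have [W [F [cE [[hW1 hW2] hHE cEn0 hcE]]]] := gibbs_scaled hgE e0.
have [Vt [Et [ct [[hVt1 hVt2] hHt ctn0 hct]]]] := gibbs_scaled hgt k0.
have [X [sp [hX1 hX2 hHE'd]]] := herm_decomp hHE'.
set T := H *t (1%:M : 'M[R[i]]_e) + (1%:M : 'M[R[i]]_n) *t HE.
set T' := Ht *t (1%:M : 'M[R[i]]_e') + (1%:M : 'M[R[i]]_k) *t HE'.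
have hUT : U *m T *m adj U = T' by rewrite hcomm -mulmxA hU1 mulmx1.
have hT : T = (V *t W) *m diag_mx (\row_p ((\row_i (E i)%:C%C) 0 (mxtens_unindex p).1
      + (\row_i (F i)%:C%C) 0 (mxtens_unindex p).2)) *m adj (V *t W).
  by rewrite /T hH hHE tens_sum_decomp.
have hT' : T' = (Vt *t X) *m diag_mx (\row_p ((\row_i (Et i)%:C%C) 0 (mxtens_unindex p).1
      + sp 0 (mxtens_unindex p).2)) *m adj (Vt *t X).
  by rewrite /T' hHt {1}hHE'd tens_sum_decomp.
set dT := \row_p _ in hT; set dT' := \row_p _ in hT'.
pose gf (z : R[i]) := (expR (- beta * complex.Re z))%:C%C.
have [p hp] := interp ([seq dT 0 x | x <- enum 'I_(n * e)] ++ [seq dT' 0 x | x <- enum 'I_(k * e')]) gf.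
have uVW1 : (V *t W) *m adj (V *t W) = 1%:M by rewrite hadj_tens tensmx_mul hV1 hW1 tens11.
have uVW2 : adj (V *t W) *m (V *t W) = 1%:M by rewrite hadj_tens tensmx_mul hV2 hW2 tens11.
have uVX1 : (Vt *t X) *m adj (Vt *t X) = 1%:M by rewrite hadj_tens tensmx_mul hVt1 hX1 tens11.
have uVX2 : adj (Vt *t X) *m (Vt *t X) = 1%:M by rewrite hadj_tens tensmx_mul hVt2 hX2 tens11.
have pT : pev p T = (c * cE) *: (g *t gE).
  rewrite hT pev_udiag // -tensZZ -hc -hcE tens_udiag; congr (_ *m diag_mx _ *m _).
  apply/rowP => x; rewrite !mxE hp; last first.
    by rewrite mem_cat; apply/orP; left; apply/mapP; exists x; rewrite ?mem_enum // /dT !mxE.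
  rewrite /gf /= mulrDr expRD rmorphM //.
have pT' : pev p T' = (Vt *m diag_mx (\row_i (expR (- beta * Et i))%:C%C) *m adj Vt)
     *t (X *m diag_mx (\row_i gf (sp 0 i)) *m adj X).
  rewrite hT' pev_udiag // tens_udiag; congr (_ *m diag_mx _ *m _).
  apply/rowP => x; rewrite !mxE hp; last first.
    by rewrite mem_cat; apply/orP; right; apply/mapP; exists x; rewrite ?mem_enum // /dT' !mxE.
  by rewrite /gf; case: (sp 0 _) => a b /=; rewrite mulrDr expRD rmorphM.
set G' := X *m diag_mx _ *m adj X in pT'.
have hgg : g *t gE = (c * cE)^-1 *: pev p T.
  by rewrite pT scalerA mulVf ?scale1r // mulf_neq0.
exists ((c * cE)^-1 * (\tr G' * ct)).
rewrite hgg -scalemxAr -scalemxAl -pev_conj // hUT pT' hct ptrace2Z ptrace2_tens.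
by rewrite !scalerA mulrA.
Qed.

Lemma gibbs_pres {R : realType} (beta : R) n k (H g : 'M[R[i]]_n) (Ht gt : 'M[R[i]]_k)
  (Ch : 'M[R[i]]_n -> 'M[R[i]]_k) :
  (0 < n)%N -> gibbs beta H g -> gibbs beta Ht gt -> thermal_op beta H Ht Ch ->
  Ch g = gt \/ Ch g = 0.
Proof.
move=> n0 hg hgt [e [e' [HE [gE [HE' [U [hHE [hHE' [hgE [hU1 [hU2 [hcomm hCh]]]]]]]]]]]].
rewrite hCh.
have [k0|k0] := posnP k.
  by left; apply/matrixP => i j; have := ltn_ord i; rewrite {2}k0.
have [e'0|e'0] := posnP e'.
  right; apply/matrixP => i j; rewrite !mxE big1 // => l _.
  by have := ltn_ord l; rewrite {2}e'0.
have [e0|e0] := posnP e.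
  exfalso; have kp : (0 < k * e')%N by rewrite muln_gt0 k0 e'0.
  have := congr1 (fun M : 'M[R[i]]_(k * e') => M (Ordinal kp) (Ordinal kp)) hU1.
  rewrite /= !mxE eqxx sum_tens big1; last first.
    by move=> i _; apply: big1 => l _; have := ltn_ord l; rewrite {2}e0.
  by move/eqP; rewrite eq_sym oner_eq0.
left; have [lam hl] := pres_scalar n0 e0 k0 hg hgt hgE hHE' hU1 hU2 hcomm.
have tr1 : \tr (ptrace2 (U *m (g *t gE) *m adj U)) = 1.
  rewrite tr_ptrace mxtrace_mulC mulmxA hU2 mul1mx tr_tens.
  by rewrite (gibbs_trace hg n0) (gibbs_trace hgE e0) mulr1.
rewrite hl in tr1 *; rewrite mxtraceZ (gibbs_trace hgt k0) mulr1 in tr1.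
by rewrite tr1 scale1r.
Qed.


Lemma tr_udiag {R : realType} n (A Y : 'M[R[i]]_n) (d : 'rV[R[i]]_n) :
  \tr (A *m (Y *m diag_mx d *m adj Y)) = \sum_c (adj Y *m A *m Y) c c * d 0 c.
Proof.
rewrite !mulmxA mxtrace_mulC !mulmxA mul_mx_diag /mxtrace.
by apply: eq_bigr => c _; rewrite mxE.
Qed.

Lemma tr_uconj {R : realType} n (A Y : 'M[R[i]]_n) :
  Y *m adj Y = 1%:M -> \tr (adj Y *m A *m Y) = \tr A.
Proof. by move=> h; rewrite mxtrace_mulC mulmxA h mul1mx. Qed.

Lemma tr_psd_ge0 {R : realType} n (A : 'M[R[i]]_n) : psd A -> 0 <= \tr A.
Proof. by move=> hA; apply: sumr_ge0 => c _; exact: psd_entry. Qed.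

Lemma state_decomp {R : realType} n (rho : 'M[R[i]]_n) :
  state rho -> exists (X : 'M[R[i]]_n) (r : 'rV[R[i]]_n),
   [/\ X *m adj X = 1%:M, rho = X *m diag_mx r *m adj X,
       forall c, 0 <= r 0 c & forall c, r 0 c <= 1].
Proof.
move=> [hp ht].
have [X [sp [h1 h2 hd]]] := herm_decomp (psd_herm hp).
have hsp c : sp 0 c = (adj X *m rho *m X) c c.
  by rewrite hd mulmxA mulmxA h2 mul1mx -mulmxA h2 mulmx1 mxE eqxx mulr1n.
have r0 c : 0 <= sp 0 c by rewrite hsp; apply: psd_conj_entry.
exists X, sp; split => // c.
have : \tr rho = \sum_c sp 0 c.
  by rewrite hd -mulmxA mxtrace_mulC -mulmxA h2 mulmx1 mxtrace_diag.
rewrite ht => hs; rewrite hs (bigD1 c) //= lerDl.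
by apply: sumr_ge0 => j _.
Qed.

Lemma lower_bound {R : realType} (beta : R) n (H g rho : 'M[R[i]]_n) :
  (0 < n)%N -> gibbs beta H g -> state rho ->
  exists m : R, 0 < m /\ forall Q, effect Q ->
    m%:C%C * \tr (Q *m rho) <= \tr (Q *m g) /\ 0 <= \tr (Q *m rho).
Proof.
move=> n0 [V [E [[hV1 hV2] [_ hg]]]] hs.
have S0 := sum_expR_gt0 beta E n0.
pose q c := expR (- beta * E c) / \sum_(j < n) expR (- beta * E j).
have q0 c : 0 < q c by rewrite /q divr_gt0 // expR_gt0.
pose m := \big[Order.min/1]_c q c.
have m0 : 0 < m by apply: lt_bigmin => // c _.
have mq c : m <= q c by apply: bigmin_le.
have [X [r [hX1 hrd hr0 hr1]]] := state_decomp hs.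
exists m; split => // Q [hQ _].
have trQ : \tr (Q *m rho) <= \tr Q.
  rewrite hrd tr_udiag -(tr_uconj Q hX1); apply: ler_sum => c _.
  by rewrite ler_piMr // psd_conj_entry.
have trQ0 : 0 <= \tr (Q *m rho).
  by rewrite hrd tr_udiag; apply: sumr_ge0 => c _; rewrite mulr_ge0 // psd_conj_entry.
split => //.
apply: (le_trans (y := m%:C%C * \tr Q)).
  by rewrite ler_wpM2l // lecR ltW.
rewrite hg tr_udiag -(tr_uconj Q hV1) mulr_sumr; apply: ler_sum => c _.
rewrite mulrC mxE; apply: ler_wpM2l.
  by have := psd_conj_entry V c hQ; rewrite mxE.
by rewrite mxE lecE /= eqxx (mq c).
Qed.


Lemma gibbs_entry_ge0 {R : realType} (beta : R) n (E : 'I_n -> R) c :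
  0 <= (\row_i (expR (- beta * E i) / \sum_(j < n) expR (- beta * E j))%:C%C) 0 c :> R[i].
Proof.
rewrite mxE lecE /= eqxx /=; apply: divr_ge0; first exact: expR_ge0.
by apply: sumr_ge0 => j _; exact: expR_ge0.
Qed.

Lemma tr_gibbs_ge0 {R : realType} (beta : R) n (K g A : 'M[R[i]]_n) :
  psd A -> gibbs beta K g -> 0 <= \tr (A *m g).
Proof.
move=> hA [V [E [_ [_ ->]]]]; rewrite tr_udiag; apply: sumr_ge0 => c _.
by rewrite mulr_ge0 ?psd_conj_entry ?gibbs_entry_ge0.
Qed.

Lemma chan_effect {R : realType} (beta : R) n k (H : 'M[R[i]]_n) (Ht : 'M[R[i]]_k)
  (Ch : 'M[R[i]]_n -> 'M[R[i]]_k) (X : 'M[R[i]]_k) :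
  thermal_op beta H Ht Ch -> effect X ->
  exists Y, effect Y /\ forall s, \tr (Ch s *m X) = \tr (Y *m s).
Proof.
move=> [e [e' [HE [gE [HE' [U [hHE [hHE' [hgE [hU1 [hU2 [hcomm hCh]]]]]]]]]]]] hX.
case: hgE => [W [F [[hW1 hW2] [_ hgE]]]].
set d := \row_i _ in hgE.
exists (Dual U W d X); split.
  apply: Dual_effect => //.
    by move=> b; apply: gibbs_entry_ge0.
  under eq_bigr do rewrite mxE.
  rewrite -rmorph_sum /= -mulr_suml lecE /= eqxx /=.
  set S := \sum_(j < e) _.
  by have [->|h] := eqVneq S 0; [rewrite mul0r ler01 | rewrite divff].
move=> s; rewrite hCh hgE Dual_tr mxtrace_mulC //.
Qed.

Unset Implicit Arguments.
Set Strict Implicit.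

Theorem mainTheorem7 (R : realType) (beta : R) (hbeta : 0 < beta)
    (n : nat) (H gamma rho : 'M[R[i]]_n)
    (hH : is_herm H) (hgamma : gibbs beta H gamma) (hrho : state rho)
    (eps : R) (heps0 : 0 <= eps) (heps1 : eps < 1)
    (k : nat) (Ht gammat : 'M[R[i]]_k)
    (hHt : is_herm Ht) (hgammat : gibbs beta Ht gammat)
    (M : nat) (Ch : 'I_M -> 'M[R[i]]_n -> 'M[R[i]]_k)
    (hCh : forall i, thermal_op beta H Ht (Ch i))
    (Pi : 'I_M -> 'M[R[i]]_k) (hPi : povm Pi)
    (hsucc : ((1 - eps)%:C%C <= (M%:R)^-1 * \sum_(i < M) \tr (Ch i rho *m Pi i))) :
  ln (M%:R : R) <= DH eps rho gamma.
Proof.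
have n0 : (0 < n)%N.
  case: hrho => _ ht; rewrite lt0n; apply/eqP => n0.
  move: ht; rewrite /mxtrace big1 => [/eqP|i _]; first by rewrite eq_sym oner_eq0.
  by have := ltn_ord i; rewrite {2}n0.
have M0 : (0 < M)%N.
  rewrite lt0n; apply/negP => /eqP M0; move: hsucc; rewrite [in M%:R]M0 invr0 mul0r lecE /= => /andP[_].
  by rewrite subr_le0 leNgt heps1.
have MC0 : (M%:R : R[i]) != 0 by rewrite pnatr_eq0 -lt0n.
case: hPi => hPi0 hPi1.
have effPi i : effect (Pi i).
  split => //; rewrite -hPi1 (bigD1 i) //= addrC addrK.
  by apply: psd_sum => j _.
have := fun i => chan_effect (hCh i) (effPi i).
move=> /fin_all_exists [Y hY].
pose Q := (M%:R)^-1 *: \sum_i Y i.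
have effQ : effect Q.
  split.
    apply: psdZ; first by rewrite invr_ge0 ler0n.
    by apply: psd_sum => i _; case: (hY i) => -[].
  have -> : 1%:M - Q = (M%:R)^-1 *: \sum_i (1%:M - Y i).
    rewrite sumrB sumr_const card_ord scalerBr; congr (_ - _).
    by rewrite -[1%:M *+ M]scaler_nat scalerA mulVf // scale1r.
  apply: psdZ; first by rewrite invr_ge0 ler0n.
  by apply: psd_sum => i _; case: (hY i) => -[].
have trQ s : \tr (Q *m s) = (M%:R)^-1 * \sum_i \tr (Ch i s *m Pi i).
  rewrite -scalemxAl mxtraceZ mulmx_suml raddf_sum /=; congr (_ * _).
  by apply: eq_bigr => i _; case: (hY i) => _ ->.
have hQrho : (1 - eps)%:C%C <= \tr (Q *m rho) by rewrite trQ.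
have hQg : \tr (Q *m gamma) <= (M%:R)^-1.
  rewrite trQ -[X in _ <= X]mulr1; apply: ler_wpM2l; first by rewrite invr_ge0 ler0n.
  apply: (le_trans (y := \sum_i \tr (gammat *m Pi i))).
    apply: ler_sum => i _; case: (gibbs_pres n0 hgamma hgammat (hCh i)) => ->; first by [].
    by rewrite mul0mx mxtrace0 mxtrace_mulC; exact: (tr_gibbs_ge0 (hPi0 i) hgammat).
  have -> : \sum_i \tr (gammat *m Pi i) = \tr (gammat *m \sum_i Pi i).
    by rewrite mulmx_sumr raddf_sum.
  rewrite hPi1 mulmx1; have [k0|k0] := posnP k; last by rewrite (gibbs_trace hgammat k0).
  by rewrite /mxtrace big1 ?ler01 // => i; have := ltn_ord i; rewrite {2}k0.
have [m [m0 hm]] := lower_bound n0 hgamma hrho.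
rewrite /DH; set S := (X in inf X).
have L0 : 0 < m * (1 - eps) by rewrite mulr_gt0 // subr_gt0.
have lbS : forall x, S x -> m * (1 - eps) <= x.
  move=> x [Q' [hQ' [hr ->]]]; have [h1 h2] := hm Q' hQ'.
  have : (m * (1 - eps))%:C%C <= \tr (Q' *m gamma).
    rewrite rmorphM; apply: le_trans h1; rewrite ler_wpM2l //.
    by rewrite lecE /= eqxx /= ltW.
  by rewrite lecE => /andP[_].
have SQ : S (complex.Re (\tr (Q *m gamma))) by exists Q.
have hMC : ((M%:R : R)^-1)%:C%C = (M%:R : R[i])^-1 by rewrite fmorphV rmorph_nat.
have infle : inf S <= (M%:R)^-1.
  apply: le_trans (ge_inf _ SQ) _; first by exists (m * (1 - eps)) => x hx; apply: lbS.
  by move: hQg; rewrite -hMC lecE => /andP[_].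
have infge : m * (1 - eps) <= inf S by apply: lb_le_inf; [exists (complex.Re (\tr (Q *m gamma))) | exact: lbS].
have inf0 : 0 < inf S by apply: lt_le_trans infge.
rewrite -[ln _]opprK lerN2 -lnV ?posrE ?ltr0n //.
by rewrite ler_ln ?posrE ?invr_gt0 ?ltr0n.
Qed.
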